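(* Let $m\ge6$ be even, $t=m/2$, and $s$ an integer with $2\le s\le 2^{t-1}$. Let $E_1,\dots,E_\alpha$ be a partial spread in $\mathbb{F}_2^m$ and $A,B\subseteq\{1,\dots,\alpha\}$ with $|A|=|B|=s$ and $|A\cap B|=1$. Let $f=\sum_{i\in A}f_i$, $g=\sum_{i\in B}f_i$, and $F=\{f,g,f+g\}$. Then for all nonzero $\mathbf{h},\mathbf{l}\in\mathbb{F}_2^m$ with $\mathbf{h}\neq\mathbf{l}$ and all $f_1,f_2\in F$ with $f_1\neq f_2$, \[\widehat{f_1}(\mathbf{h}+\mathbf{l})+\widehat{f_2}(\mathbf{h})-\widehat{f_1+f_2}(\mathbf{l})\neq 2^m\quad\text{and}\quad \widehat{f_1}(\mathbf{h}+\mathbf{l})+\widehat{f_2}(\mathbf{l})-\widehat{f_1+f_2}(\mathbf{h})\neq 2^m.\]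
   Context: A partial spread in $\mathbb{F}_2^m$ ($m=2t$) is a set of subspaces $E_1,\dots,E_\alpha$ of $\mathbb{F}_2^m$, each of dimension $t$, with $E_i\cap E_j=\{\mathbf{0}\}$ for $i\ne j$. $f_i:\mathbb{F}_2^m\to\mathbb{F}_2$ is the indicator function of $E_i\setminus\{\mathbf{0}\}$; sums of Boolean functions are mod 2. For a Boolean function $h$, $\widehat{h}(\mathbf{w})=\sum_{\mathbf{x}\in\mathbb{F}_2^m}(-1)^{h(\mathbf{x})+\mathbf{w}\cdot\mathbf{x}}$ with the standard inner product. *)

(* Defs.v *)
From HB Require Import structures.
From mathcomp Require Import all_boot all_order all_algebra all_field.
Set Implicit Arguments. Unset Strict Implicit. Unset Printing Implicit Defensive.
Import GRing.Theory.
Local Open Scope ring_scope.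

Notation vec m := 'rV['F_2]_m.

Definition dotF2 (m : nat) (w x : vec m) : 'F_2 := \sum_(i < m) w 0 i * x 0 i.

(* Boolean functions F_2^m -> F_2, values in bool (true = 1) *)
Definition boolfun (m : nat) := vec m -> bool.

Definition walsh (m : nat) (h : boolfun m) (w : vec m) : int :=
  \sum_(x : vec m) (-1) ^+ (h x (+) (dotF2 w x != 0)).

Definition bfadd (m : nat) (f g : boolfun m) : boolfun m := fun x => f x (+) g x.

Definition partial_spread (m t alpha : nat) (E : 'I_alpha -> {vspace vec m}) :=
  (forall i, \dim (E i) = t) /\
  (forall i j, i != j -> (E i :&: E j)%VS = 0%VS).

Definition spread_ind (m : nat) (E : {vspace vec m}) : boolfun m :=
  fun x => (x \in E) && (x != 0).

Definition spread_sum (m alpha : nat) (E : 'I_alpha -> {vspace vec m})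
  (A : {set 'I_alpha}) : boolfun m :=
  fun x => \big[addb/false]_(i in A) spread_ind (E i) x.

(* Main.v *)
Require Import Defs.
From HB Require Import structures.
From mathcomp Require Import all_boot all_order all_algebra all_field zify ring lra.
Import GRing.Theory Num.Theory.
Local Open Scope ring_scope.

Lemma F2_cases (a : 'F_2) : a = 0 \/ a = 1.
Proof. case: a => [[|[|n]] Hn]; [left|right|]; try by apply/val_inj. by []. Qed.

Lemma F2_add1 (a : 'F_2) : (a + 1 != 0) = ~~ (a != 0).
Proof. case: (F2_cases a) => ->; by [rewrite add0r oner_eq0 eqxx | have -> : (1 + 1 : 'F_2) = 0 by apply/val_inj]. Qed.

Section S.
Variables (m : nat).
Implicit Types (w x y : vec m).

Definition chi (w x : vec m) : int := (-1) ^+ (dotF2 w x != 0).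

Lemma dotD w x y : dotF2 w (x + y) = dotF2 w x + dotF2 w y.
Proof. rewrite /dotF2 -big_split; apply: eq_bigr => i _; by rewrite mxE mulrDr. Qed.

Lemma dot0 w : dotF2 w 0 = 0.
Proof. rewrite /dotF2 big1 // => i _; by rewrite mxE mulr0. Qed.

Lemma dot_delta w k : dotF2 w (delta_mx 0 k) = w 0 k.
Proof.
rewrite /dotF2 (bigD1 k) //= mxE !eqxx mulr1 big1 ?addr0 // => i /negbTE Hi.
by rewrite mxE; case: (i =P k) Hi => [->|_ _]; rewrite ?eqxx // andbF mulr0.
Qed.

Lemma exists_k (w : vec m) : w != 0 -> exists k, w 0 k != 0.
Proof.
move=> Hw; case: (pickP (fun k => w 0 k != 0)) => [k Hk|H]; first by exists k.
case/eqP: Hw; apply/rowP => k; rewrite mxE; by move: (H k) => /= /negbFE/eqP.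
Qed.

Lemma charsum (V : {vspace vec m}) w :
  (\sum_(x | x \in V) chi w x = 0) \/
  (\sum_(x | x \in V) chi w x = (2 ^ \dim V)%N%:Z /\ forall x, x \in V -> dotF2 w x = 0).
Proof.
case: (pickP (fun y => (y \in V) && (dotF2 w y != 0))) => [y /andP [yV Hy]|H].
  left; set S := \sum_(x | x \in V) chi w x.
  have HS : S = - S.
    rewrite {1}/S (reindex_inj (addIr y)) /= -sumrN.
    apply: eq_big => x; first by rewrite rpredDr.
    move=> _; rewrite /chi dotD.
    have -> : dotF2 w y = 1 by case: (F2_cases (dotF2 w y)) Hy => -> //; rewrite eqxx.
    by rewrite F2_add1; case: (dotF2 w x != 0); rewrite /= ?expr0 ?expr1 ?opprK.
  lia.
right; split; last first.
  by move=> x xV; move: (H x); rewrite xV /= => /negbFE/eqP.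
rewrite (eq_bigr (fun _ => 1)); last first.
  by move=> x xV; move: (H x); rewrite xV /= /chi => ->.
by rewrite sumr_const card_vspace card_Fp //= pmulrn intz.
Qed.

Variables (t alpha : nat) (E : 'I_alpha -> {vspace vec m}).
Hypothesis HE : partial_spread t E.
Hypothesis Hm : m = (2 * t)%N.

Lemma uniq_pt i j x : x \in E i -> x \in E j -> x != 0 -> i = j.
Proof.
move=> Hi Hj Hx; apply/eqP; apply: contraNT Hx => Hij.
by move: (HE.2 i j Hij) => Hc; rewrite -memv0 -Hc memv_cap Hi Hj.
Qed.

Lemma uniq_ker i j w : w != 0 ->
  (forall x, x \in E i -> dotF2 w x = 0) ->
  (forall x, x \in E j -> dotF2 w x = 0) -> i = j.
Proof.
move=> Hw Hi Hj; apply/eqP; apply/negPn/negP => Hij.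
have Hd : \dim (E i + E j) = m.
  move: (dimv_sum_cap (E i) (E j)); rewrite (HE.2 i j Hij) dimv0 !HE.1; have := Hm; lia.
have Hf : (E i + E j)%VS = fullv.
  apply/eqP; rewrite eqEdim subvf dimvf /= Hd /dim /= mul1n leqnn //.
case: (exists_k _ Hw) => k; rewrite -dot_delta.
have : delta_mx 0 k \in (E i + E j)%VS by rewrite Hf memvf.
case/memv_addP => y yi [z zj ->]; by rewrite dotD Hi // Hj // addr0 eqxx.
Qed.

Definition n (C : {set 'I_alpha}) x : nat := \sum_(i in C) ((x \in E i) && (x != 0%R)).

Lemma n_le1 C x : (n C x <= 1)%N.
Proof.
rewrite /n; case: (pickP (fun i => (i \in C) && ((x \in E i) && (x != 0)))) => [i0 /andP [Hi0 /andP [Ex Hx]]|H].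
  rewrite (bigD1 i0) //= Ex Hx big1 // => j /andP [_ Hj].
  suff -> : (x \in E j) = false by [].
  apply/negbTE; apply: contra Hj => Ej; by rewrite (uniq_pt _ _ _ Ej Ex Hx).
by rewrite big1 // => i Hi; move: (H i); rewrite Hi => /= ->.
Qed.

Lemma spread_sum_n C x : spread_sum E C x = odd (n C x).
Proof.
rewrite /spread_sum /n (big_morph odd oddD (erefl : odd 0 = false)).
by apply: eq_bigr => i _; rewrite oddb.
Qed.

Definition T (C : {set 'I_alpha}) w : int := \sum_(i in C) \sum_(x | x \in E i) chi w x.

Lemma sumall w : w != 0 -> \sum_x chi w x = 0.
Proof.
move=> Hw; case: (charsum fullv w); rewrite (eq_bigl _ _ (@memvf _ _)) // => -[_ H].
case: (exists_k _ Hw) => k; by rewrite -dot_delta H ?memvf // eqxx.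
Qed.

Lemma walshC (phi : boolfun m) C w : w != 0 -> (forall x, phi x = odd (n C x)) ->
  walsh phi w = 2 * (#|C|%:Z) - 2 * T C w.
Proof.
move=> Hw Hphi.
have -> : walsh phi w = \sum_x (chi w x - 2 * \sum_(i in C) (chi w x * ((x \in E i) && (x != 0))%:R)).
  apply: eq_bigr => x _; rewrite Hphi -mulr_sumr -natr_sum -/(n C x).
  move: (n_le1 C x); rewrite /chi; case: (n C x) => [|[|]] //= _;
  case: (_ != 0); rewrite /= ?expr0 ?expr1; lia.
rewrite sumrB sumall // add0r -mulr_sumr exchange_big /=.
have -> : \sum_(i in C) \sum_x (chi w x * ((x \in E i) && (x != 0))%:R) =
          \sum_(i in C) (\sum_(x | x \in E i) chi w x - 1).
  apply: eq_bigr => i _.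
  rewrite [in RHS](bigD1 0) ?mem0v //= /chi dot0 eqxx expr0.
  rewrite (eq_bigr (fun x => if (x \in E i) && (x != 0) then (-1)^+(dotF2 w x != 0) else 0)); last by move=> x _; rewrite mulr_natr mulrb.
  rewrite -big_mkcond /=; ring.
rewrite sumrB /T sumr_const natz; ring.
Qed.

Lemma T_bounds C w : w != 0 -> 0 <= T C w <= (2 ^ t)%N%:Z.
Proof.
move=> Hw; have Sge : forall i, 0 <= \sum_(x | x \in E i) chi w x.
  by move=> i; case: (charsum (E i) w) => [->|[-> _]].
apply/andP; split; first by apply: sumr_ge0.
rewrite /T; case: (pickP (fun i => (i \in C) && (\sum_(x | x \in E i) chi w x != 0))) => [i0 /andP [Hi0 Hs]|H].
  case: (charsum (E i0) w) => [Hz|[Hv Hk]]; first by rewrite Hz eqxx in Hs.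
  rewrite (bigD1 i0) //= Hv HE.1 big1 ?addr0 // => j /andP [_ Hj].
  case: (charsum (E j) w) => [//|[_ Hk2]].
  by move: Hj; rewrite (uniq_ker _ _ _ Hw Hk2 Hk) eqxx.
rewrite big1 // => i Hi; by move: (H i); rewrite Hi /= => /negbFE/eqP.
Qed.


Lemma final_ineq (phi1 phi2 phi3 : boolfun m) C1 C2 C3 (s : nat) h l :
  (3 <= t)%N -> (2 <= s)%N -> (s <= 2^(t-1))%N ->
  h != 0 -> l != 0 -> h + l != 0 ->
  (forall x, phi1 x = odd (n C1 x)) -> (forall x, phi2 x = odd (n C2 x)) ->
  (forall x, phi3 x = odd (n C3 x)) ->
  (#|C1| + #|C2| + 2 <= #|C3| + 2 * s)%N ->
  walsh phi1 (h + l) + walsh phi2 h - walsh phi3 l != 2%:Z ^+ m.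
Proof.
move=> Ht Hs1 Hs2 Hh Hl Hhl H1 H2 H3 Hc.
rewrite (walshC _ _ _ Hhl H1) (walshC _ _ _ Hh H2) (walshC _ _ _ Hl H3).
move: (T_bounds C1 _ Hhl) (T_bounds C2 _ Hh) (T_bounds C3 _ Hl) => /andP[a1 b1] /andP[a2 b2] /andP[a3 b3].
have HP : (2 ^ t = 2 * 2 ^ (t - 1))%N by rewrite -expnS; have -> : (t - 1).+1 = t by lia.
have HP8 : (2 ^ 3 <= 2 ^ t)%N by rewrite leq_exp2l.
have E2 : 2%:Z ^+ m = (2 ^ t * 2 ^ t)%N%:Z.
  have -> : (2 ^ t * 2 ^ t = 2 ^ m)%N by rewrite Hm mul2n -addnn expnD.
  by rewrite -!natz natrX.
rewrite E2.
move: HP HP8 Hs2 Hc a1 b1 a2 b2 a3 b3.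
set P := (2 ^ t)%N; set Q := (2 ^ (t - 1))%N.
set T1 := T C1 (h + l); set T2 := T C2 h; set T3 := T C3 l.
move=> *. nia.
Qed.

End S.

Theorem lemma7 (m t s alpha : nat) (E : 'I_alpha -> {vspace vec m})
  (A B : {set 'I_alpha}) :
  (6 <= m)%N -> m = (2 * t)%N ->
  (2 <= s)%N -> (s <= 2 ^ (t - 1))%N ->
  partial_spread t E ->
  #|A| = s -> #|B| = s -> #|A :&: B| = 1%N ->
  let f := spread_sum E A in
  let g := spread_sum E B in
  forall (h l : vec m), h != 0 -> l != 0 -> h != l ->
  forall f1 f2 : boolfun m,
    (f1 = f \/ f1 = g \/ f1 = bfadd f g) ->
    (f2 = f \/ f2 = g \/ f2 = bfadd f g) ->
    f1 <> f2 ->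
    walsh f1 (h + l) + walsh f2 h - walsh (bfadd f1 f2) l != 2%:Z ^+ m /\
    walsh f1 (h + l) + walsh f2 l - walsh (bfadd f1 f2) h != 2%:Z ^+ m.
Proof.
move=> H6 Hm Hs1 Hs2 HE HA HB HAB f g h l Hh Hl Hhl f1 f2 Hf1 Hf2 Hne.
have Ht : (3 <= t)%N by lia.
have Hhl' : h + l != 0.
  apply: contra Hhl; rewrite addr_eq0 => /eqP ->.
  apply/eqP/rowP => k; rewrite mxE; by case: (F2_cases (l 0 k)) => ->; apply/val_inj.
set D := (A :\: B) :|: (B :\: A).
pose N := @n m alpha E.
have nA : forall x, f x = odd (N A x) by move=> x; exact: (@spread_sum_n m alpha E).
have nB : forall x, g x = odd (N B x) by move=> x; exact: (@spread_sum_n m alpha E).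
have nD : forall x, bfadd f g x = odd (N D x).
  move=> x; rewrite /bfadd nA nB -oddD.
  have -> : (N A x + N B x = N D x + 2 * N (A :&: B) x)%N.
    rewrite /N /n (big_setID B (A:=A)) /= (big_setID A (A:=B)) /= [B :&: A]setIC.
    rewrite (big_setID (A :\: B) (A:=D)) /=.
    have -> : D :&: (A :\: B) = A :\: B.
      apply/setP => i; rewrite !inE; by case: (i \in A); case: (i \in B).
    have -> : D :\: (A :\: B) = B :\: A.
      apply/setP => i; rewrite !inE; by case: (i \in A); case: (i \in B).
    lia.
  by rewrite oddD oddM /= addbF.
have cD : #|D| = (2 * s - 2)%N.
  rewrite cardsU !cardsD HA HB HAB setIC HAB.
  have -> : (A :\: B) :&: (B :\: A) = set0.
    apply/setP => i; rewrite !inE; by case: (i \in A); case: (i \in B).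
  rewrite cards0; lia.
have key : forall (phi1 phi2 phi3 : boolfun m) C1 C2 C3,
  (forall x, phi1 x = odd (N C1 x)) -> (forall x, phi2 x = odd (N C2 x)) ->
  (forall x, phi3 x = odd (N C3 x)) ->
  (#|C1| + #|C2| + 2 <= #|C3| + 2 * s)%N ->
  walsh phi1 (h + l) + walsh phi2 h - walsh phi3 l != 2%:Z ^+ m /\
  walsh phi1 (h + l) + walsh phi2 l - walsh phi3 h != 2%:Z ^+ m.
  move=> phi1 phi2 phi3 C1 C2 C3 H1 H2 H3 Hc; split.
    exact: (@final_ineq m t alpha E HE Hm _ _ _ _ _ _ s h l Ht Hs1 Hs2 Hh Hl Hhl' H1 H2 H3 Hc).
  rewrite [h + l]addrC; apply: (@final_ineq m t alpha E HE Hm _ _ _ _ _ _ s l h Ht Hs1 Hs2 Hl Hh _ H1 H2 H3 Hc); by rewrite addrC.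
case: Hf1 => [E1|[E1|E1]]; case: Hf2 => [E2|[E2|E2]]; rewrite E1 E2 in Hne *.
- by case: Hne.
- apply: (key f g _ A B D) => //;
  try (rewrite ?cD ?HA ?HB; lia); try (move=> x; rewrite /bfadd ?nA ?nB ?nD -?nA -?nB -?nD /bfadd; by case: (f x); case: (g x)).
- apply: (key f (bfadd f g) _ A D B) => //;
  try (rewrite ?cD ?HA ?HB; lia); try (move=> x; rewrite /bfadd ?nA ?nB ?nD -?nA -?nB -?nD /bfadd; by case: (f x); case: (g x)).
- apply: (key g f _ B A D) => //;
  try (rewrite ?cD ?HA ?HB; lia); try (move=> x; rewrite /bfadd ?nA ?nB ?nD -?nA -?nB -?nD /bfadd; by case: (f x); case: (g x)).
- by case: Hne.
- apply: (key g (bfadd f g) _ B D A) => //;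
  try (rewrite ?cD ?HA ?HB; lia); try (move=> x; rewrite /bfadd ?nA ?nB ?nD -?nA -?nB -?nD /bfadd; by case: (f x); case: (g x)).
- apply: (key (bfadd f g) f _ D A B) => //;
  try (rewrite ?cD ?HA ?HB; lia); try (move=> x; rewrite /bfadd ?nA ?nB ?nD -?nA -?nB -?nD /bfadd; by case: (f x); case: (g x)).
- apply: (key (bfadd f g) g _ D B A) => //;
  try (rewrite ?cD ?HA ?HB; lia); try (move=> x; rewrite /bfadd ?nA ?nB ?nD -?nA -?nB -?nD /bfadd; by case: (f x); case: (g x)).
- by case: Hne.
Qed.
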